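(* Let $j\in\mathbb N_0$ and let $s_0,\dots,s_{2j+2}$ be Hermitian $q\times q$ matrices such that $(s_{l+k})_{l,k=0}^{j}$ and $(s_{l+k+1})_{l,k=0}^{j}$ are positive definite. Take $a=0$. Then for all sufficiently large $b>0$ the matrices $K_{1,j}$ and $H_{2,j}$ (formed with $a=0$ and this $b$) are positive definite, so that $\mathbf m_j(0,b)$ and $\mathbf l_j(0,b)$ are defined, and $$\mathbf M_j(0)=\lim_{b\to+\infty} b\,\mathbf m_j(0,b),\qquad \mathbf L_j(0)=\lim_{b\to+\infty} b^{-1}\,\mathbf l_j(0,b).$$
   Context: All matrices are complex, $q\in\mathbb N$, $I_q$, $0_q$ are the $q\times q$ identity and zero matrices. For real $a<b$ set $\widehat s_i:=-ab\,s_i+(a+b)s_{i+1}-s_{i+2}$, $H_{1,i}:=(s_{l+k})_{l,k=0}^i$, $H_{2,i}:=(\widehat s_{l+k})_{l,k=0}^{i}$, $K_{1,i}:=(bs_{l+k}-s_{l+k+1})_{l,k=0}^{i}$, $K_{2,i}:=(-as_{l+k}+s_{l+k+1})_{l,k=0}^i$. Let $T_0:=0_q$ and, for $i\ge1$, let $T_i$ be the $(i+1)\times(i+1)$ block matrix with $I_q$ in block positions $(l+1,l)$ and $0_q$ elsewhere; $R_i(z):=(I-zT_i)^{-1}$; $v_i:=\mathrm{col}(I_q,0_q,\dots,0_q)\in\mathbb C^{(i+1)q\times q}$. Let $u_{2,0}:=-(a+b)s_0+s_1$, $u_{2,i}:=\mathrm{col}(u_{2,0},-\widehat s_0,\dots,-\widehat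 s_{i-1})$, $\widetilde u_{2,i}:=\mathrm{col}(-s_0,as_0-s_1,\dots,as_{i-1}-s_i)$. New DSM parameters (depending on $a,b$): $\lambda_i:=(u_{2,i}+av_is_0)^*R_i(a)^*H_{2,i}^{-1}R_i(a)(u_{2,i}+av_is_0)$, $\mu_i:=v_i^*R_i(a)^*K_{1,i}^{-1}R_i(a)v_i$; $\mathbf l_0(a,b):=\lambda_0$, $\mathbf l_i(a,b):=\lambda_i-\lambda_{i-1}$ ($i\ge1$); $\mathbf m_0(a,b):=\mu_0$, $\mathbf m_i(a,b):=\mu_i-\mu_{i-1}$ ($i\ge1$). Earlier DSM parameters (depending only on $a$): $\mathbf M_0(a):=s_0^{-1}$, $\mathbf M_i(a):=v_i^*R_i(a)^*H_{1,i}^{-1}R_i(a)v_i-v_{i-1}^*R_{i-1}(a)^*H_{1,i-1}^{-1}R_{i-1}(a)v_{i-1}$ ($i\ge1$); $\mathbf L_0(a):=\widetilde u_{2,0}^*K_{2,0}^{-1}\widetilde u_{2,0}$, $\mathbf L_i(a):=\widetilde u_{2,i}^*R_i(a)^*K_{2,i}^{-1}R_i(a)\widetilde u_{2,i}-\widetilde u_{2,i-1}^*R_{i-1}(a)^*K_{2,i-1}^{-1}R_{i-1}(a)\widetilde u_{2,i-1}$ ($i\ge1$). At $a=0$, $\mathbf M_j(0)$ and $\mathbf L_j(0)$ are the Dyukarev–Stieltjes parameters of the truncated Stieltjes matrix moment problem. *)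

(* Defs.v *)
(* Complex matrices are modelled over an arbitrary
   numClosedFieldType C (e.g. algC). *)
From HB Require Import structures.
From mathcomp Require Import all_boot all_order all_algebra.
Set Implicit Arguments. Unset Strict Implicit. Unset Printing Implicit Defensive.
Import Order.TTheory GRing.Theory Num.Theory.
Local Open Scope ring_scope.

Section DSM.
Variable C : numClosedFieldType.

Definition adj m n (A : 'M[C]_(m, n)) : 'M[C]_(n, m) := (map_mx Num.conj A)^T.

Definition posdef n (A : 'M[C]_n) : Prop :=
  adj A = A /\ forall x : 'cV[C]_n, x != 0 -> 0 < (adj x *m A *m x) 0 0.

Definition bdim (q i : nat) : nat := (\sum_(l < i.+1) q)%N.

Definition bhank (q i : nat) (f : nat -> 'M[C]_q) : 'M[C]_(bdim q i) :=
  @mxblock C i.+1 i.+1 (fun _ => q) (fun _ => q) (fun l k => f (l + k)%N).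

Definition Tm (q i : nat) : 'M[C]_(bdim q i) :=
  @mxblock C i.+1 i.+1 (fun _ => q) (fun _ => q)
    (fun l k => if (l : nat) == k.+1 then 1%:M else 0).

Definition Rm (q i : nat) (z : C) : 'M[C]_(bdim q i) :=
  invmx (1%:M - z *: Tm q i).

Definition bcol (q i : nat) (f : nat -> 'M[C]_q) : 'M[C]_(bdim q i, q) :=
  @mxcol C i.+1 (fun _ => q) q (fun l => f (l : nat)).

Definition vv (q i : nat) : 'M[C]_(bdim q i, q) :=
  @bcol q i (fun l => if l == 0%N then 1%:M else 0).

Variable q : nat.
Variable s : nat -> 'M[C]_q.

Definition shat (a b : C) (n : nat) : 'M[C]_q :=
  - (a * b) *: s n + (a + b) *: s n.+1 - s n.+2.

Definition H1 (i : nat) := bhank i s.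
Definition H2 (a b : C) (i : nat) := bhank i (shat a b).
Definition K1 (b : C) (i : nat) := bhank i (fun n => b *: s n - s n.+1).
Definition K2 (a : C) (i : nat) := bhank i (fun n => - a *: s n + s n.+1).

Definition u20 (a b : C) : 'M[C]_q := - (a + b) *: s 0 + s 1.
Definition u2 (a b : C) (i : nat) : 'M[C]_(bdim q i, q) :=
  bcol i (fun l => if l == 0%N then u20 a b else - shat a b l.-1).
Definition ut2 (a : C) (i : nat) : 'M[C]_(bdim q i, q) :=
  bcol i (fun l => if l == 0%N then - s 0 else a *: s l.-1 - s l).

Definition lam (a b : C) (i : nat) : 'M[C]_q :=
  let w := u2 a b i + a *: (vv q i *m s 0) in
  adj w *m adj (Rm q i a) *m invmx (H2 a b i) *m Rm q i a *m w.
Definition mu (a b : C) (i : nat) : 'M[C]_q :=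
  adj (vv q i) *m adj (Rm q i a) *m invmx (K1 b i) *m Rm q i a *m vv q i.

Definition lpar (a b : C) (i : nat) : 'M[C]_q :=
  if i is i'.+1 then lam a b i - lam a b i' else lam a b 0.
Definition mpar (a b : C) (i : nat) : 'M[C]_q :=
  if i is i'.+1 then mu a b i - mu a b i' else mu a b 0.

Definition Mnu (a : C) (i : nat) : 'M[C]_q :=
  adj (vv q i) *m adj (Rm q i a) *m invmx (H1 i) *m Rm q i a *m vv q i.
Definition Lnu (a : C) (i : nat) : 'M[C]_q :=
  adj (ut2 a i) *m adj (Rm q i a) *m invmx (K2 a i) *m Rm q i a *m ut2 a i.

Definition Mpar (a : C) (i : nat) : 'M[C]_q :=
  if i is i'.+1 then Mnu a i - Mnu a i' else invmx (s 0).
Definition Lpar (a : C) (i : nat) : 'M[C]_q :=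
  if i is i'.+1 then Lnu a i - Lnu a i'
  else adj (ut2 a 0) *m invmx (K2 a 0) *m ut2 a 0.

End DSM.

Definition mxlim_infty (C : numClosedFieldType) m n
  (F : C -> 'M[C]_(m, n)) (L : 'M[C]_(m, n)) : Prop :=
  forall eps : C, 0 < eps -> exists B : C, B \is Num.real /\
    forall b : C, B < b -> forall i j, `|F b i j - L i j| < eps.

(* Main.v *)
Require Import Defs.
From HB Require Import structures.
From mathcomp Require Import all_boot all_order all_algebra.
From mathcomp Require Import ring zify.
Import Order.TTheory GRing.Theory Num.Theory.
Local Open Scope ring_scope.

Section Adj.
Variable C : numClosedFieldType.

Lemma cjE m n (A : 'M[C]_(m,n)) i j : adj A i j = (A j i)^*.
Proof. by rewrite /adj !mxE. Qed.

Lemma cjK m n (A : 'M[C]_(m,n)) : adj (adj A) = A.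
Proof. by apply/matrixP=> i j; rewrite !cjE conjCK. Qed.

Lemma cjM m n p (A : 'M[C]_(m,n)) (B : 'M[C]_(n,p)) :
  adj (A *m B) = adj B *m adj A.
Proof.
apply/matrixP=> i j; rewrite cjE !mxE rmorph_sum; apply: eq_bigr => k _.
by rewrite !cjE rmorphM mulrC.
Qed.

Lemma cjD m n (A B : 'M[C]_(m,n)) : adj (A + B) = adj A + adj B.
Proof. by apply/matrixP=> i j; rewrite /adj !mxE rmorphD. Qed.

Lemma cjN m n (A : 'M[C]_(m,n)) : adj (- A) = - adj A.
Proof. by apply/matrixP=> i j; rewrite /adj !mxE rmorphN. Qed.

Lemma cjB m n (A B : 'M[C]_(m,n)) : adj (A - B) = adj A - adj B.
Proof. by rewrite cjD cjN. Qed.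

Lemma cjZ m n a (A : 'M[C]_(m,n)) : adj (a *: A) = a^* *: adj A.
Proof. by apply/matrixP=> i j; rewrite /adj !mxE rmorphM. Qed.

Lemma cj0 m n : adj (0 : 'M[C]_(m,n)) = 0.
Proof. by apply/matrixP=> i j; rewrite /adj !mxE rmorph0. Qed.

Lemma cj1 n : adj (1%:M : 'M[C]_n) = 1%:M.
Proof.
by apply/matrixP=> i j; rewrite cjE !mxE eq_sym conjC_nat.
Qed.

Lemma cj_inv n (A : 'M[C]_n) : A \in unitmx -> adj (invmx A) = invmx (adj A).
Proof.
move=> uA.
have h : adj A *m adj (invmx A) = 1%:M by rewrite -cjM mulVmx // cj1.
have [u1 u2] := mulmx1_unit h.
by rewrite -[LHS]mul1mx -(mulVmx u1) -mulmxA h mulmx1.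
Qed.

End Adj.

Section Quad.
Variable C : numClosedFieldType.
Variable n : nat.
Implicit Types (A H G : 'M[C]_n) (x y : 'cV[C]_n).

Definition QF A x := (adj x *m A *m x) 0 0.
Definition nrm x := (adj x *m x) 0 0.
Definition SA A := \sum_i \sum_j `|A i j|.

Lemma nrmE x : nrm x = \sum_i `|x i 0| ^+ 2.
Proof. by rewrite /nrm !mxE; apply: eq_bigr => i _; rewrite cjE normCKC. Qed.

Lemma nrm_ge0 x : 0 <= nrm x.
Proof. by rewrite nrmE sumr_ge0 // => i _; rewrite exprn_ge0. Qed.

Lemma nrm_entry x i : `|x i 0| ^+ 2 <= nrm x.
Proof.
rewrite nrmE (bigD1 i) //= lerDl sumr_ge0 // => k _; exact: exprn_ge0.
Qed.

Lemma nrm_gt0 x : x != 0 -> 0 < nrm x.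
Proof.
move=> nx; rewrite lt_def nrm_ge0 andbT; apply: contraNneq nx => h0.
apply/eqP/matrixP => i k; rewrite (ord1 k) mxE; apply/eqP.
have := nrm_entry x i; rewrite h0 => hle.
have : `|x i 0| ^+ 2 = 0 by apply/eqP; rewrite eq_le hle exprn_ge0.
by move/eqP; rewrite expf_eq0 /= normr_eq0.
Qed.

Lemma QFE A x : QF A x = \sum_k (\sum_i (x i 0)^* * A i k) * x k 0.
Proof.
rewrite /QF !mxE; apply: eq_bigr => k _; congr (_ * _).
by rewrite !mxE; apply: eq_bigr => i _; rewrite cjE.
Qed.

Lemma prod_le_nrm x i k : `|x i 0| * `|x k 0| <= nrm x.
Proof.
case/orP: (real_leVge (normr_real (x i 0)) (normr_real (x k 0))) => h.
  apply: le_trans (nrm_entry x k); rewrite expr2 ler_wpM2r //.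
apply: le_trans (nrm_entry x i); rewrite expr2 ler_wpM2l //.
Qed.

Lemma QF_bound A x : `|QF A x| <= SA A * nrm x.
Proof.
rewrite QFE; apply: le_trans (ler_norm_sum _ _ _) _.
rewrite /SA exchange_big /= mulr_suml; apply: ler_sum => k _.
rewrite mulr_suml mulr_suml; apply: le_trans (ler_norm_sum _ _ _) _.
apply: ler_sum => i _; rewrite !normrM norm_conjC.
rewrite mulrC mulrA [_ * nrm x]mulrC.
exact: (ler_wpM2r (normr_ge0 _) (prod_le_nrm _ _ _)).
Qed.


Lemma QF_conj A x : (QF A x)^* = QF (adj A) x.
Proof. by rewrite /QF -cjE !cjM cjK mulmxA. Qed.

Lemma QF_real A x : adj A = A -> QF A x \is Num.real.
Proof. by move=> hA; apply/CrealP; rewrite QF_conj hA. Qed.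

Lemma QF0 A : QF A 0 = 0.
Proof. by rewrite /QF mulmx0 mxE. Qed.

Lemma posdef_ge0 A x : posdef A -> 0 <= QF A x.
Proof.
case=> _ hp; have [->|nx] := eqVneq x 0; first by rewrite QF0.
exact/ltW/hp.
Qed.

Lemma posdef_unit A : posdef A -> A \in unitmx.
Proof.
move=> hA; rewrite unitmxE unitfE; apply/negP => /det0P [v nv hv].
have : 0 < QF A (adj v).
  case: hA => _ hp; apply: hp; apply: contraNneq nv => h.
  by rewrite -[v]cjK h cj0.
by rewrite /QF cjK hv mul0mx mxE ltxx.
Qed.

Lemma QF_expand A u v t : t \is Num.real ->
  QF A (u - t *: v) = QF A u - t * (adj u *m A *m v) 0 0
     - t * (adj v *m A *m u) 0 0 + t * t * QF A v.
Proof.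
move=> tr; rewrite /QF.
have -> : adj (u - t *: v) *m A *m (u - t *: v) = adj u *m A *m u
   - t *: (adj v *m A *m u) - (t *: (adj u *m A *m v) - (t * t) *: (adj v *m A *m v)).
  by rewrite cjB cjZ (conj_Creal tr) !(mulmxBl, mulmxBr) -!scalemxAl -!scalemxAr scalerA.
set a := adj u *m A *m u; set b := adj u *m A *m v; set c := adj v *m A *m u.
set d := adj v *m A *m v.
rewrite !mxE; ring.
Qed.

Lemma coercive H : posdef H -> exists N : C, 0 < N /\ forall x, nrm x <= N * QF H x.
Proof.
move=> pH; have uH := posdef_unit _ pH; have [aH _] := pH.
set Hi := invmx H.
have aHi : adj Hi = Hi by rewrite cj_inv // aH.
have S0 : 0 <= SA Hi by rewrite /SA sumr_ge0 // => i _; rewrite sumr_ge0.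
set N := SA Hi + 1.
have N0 : 0 < N by rewrite /N; apply: (lt_le_trans ltr01); rewrite addrC lerDl.
exists N; split => // x.
set y := Hi *m x; set t := N^-1.
have t0 : 0 < t by rewrite invr_gt0.
have tr : t \is Num.real by exact: gtr0_real.
have h1 : (adj x *m H *m y) 0 0 = nrm x by rewrite /y mulmxA -(mulmxA _ H) mulmxV // mulmx1.
have h2 : (adj y *m H *m x) 0 0 = nrm x.
  by rewrite /y cjM aHi -!mulmxA (mulmxA Hi) mulVmx // mul1mx.
have h3 : QF H y = QF Hi x.
  by rewrite /QF /y cjM aHi -!mulmxA (mulmxA H) mulmxV // mul1mx.
have ge := posdef_ge0 _ (x - t *: y) pH.
rewrite QF_expand // h1 h2 h3 in ge.
set r := nrm x in ge *; set h := QF H x in ge *; set g := QF Hi x in ge.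
have r0 : 0 <= r by exact: nrm_ge0.
have tN : t * N = 1 by rewrite mulVf // gt_eqF.
have tS : t * SA Hi <= 1.
  by rewrite -tN; apply: ler_wpM2l; [exact: ltW | rewrite /N lerDl ler01].
have gS : g <= SA Hi * r.
  apply: le_trans (QF_bound Hi x); exact: real_ler_norm (QF_real Hi x aHi).
have ttg : t * t * g <= t * r.
  apply: le_trans (_ : t * t * (SA Hi * r) <= _).
    by apply: ler_wpM2l => //; rewrite mulr_ge0 // ltW.
  rewrite -mulrA; apply: ler_wpM2l; first exact: ltW.
  by rewrite mulrA -[X in _ <= X]mul1r; apply: ler_wpM2r.
have : 0 <= h - t * r.
  apply: le_trans ge _.
  by rewrite -[X in _ <= X](subrK (t * r)) lerD2l.
rewrite subr_ge0 => htr.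
have -> : r = N * (t * r) by rewrite mulrA [N * t]mulrC tN mul1r.
by apply: ler_wpM2l => //; exact: ltW.
Qed.


Lemma inv_bound P (mu : C) : P \in unitmx -> adj P = P -> 0 < mu ->
  (forall x, mu * nrm x <= QF P x) -> forall l k, mu * `|invmx P l k| <= 1.
Proof.
move=> uP aP mu0 hP l k.
set y := col k (invmx P).
have yE m : y m 0 = invmx P m k by rewrite /y mxE.
have QP : QF P y = (y k 0)^*.
  have Py : P *m y = delta_mx k 0 by rewrite /y colE mulmxA mulmxV // mul1mx.
  by rewrite /QF -mulmxA Py -colE mxE cjE.
have hl m : mu * `|y m 0| ^+ 2 <= `|y k 0|.
  apply: le_trans (_ : mu * nrm y <= _).
    by apply: ler_wpM2l; [exact: ltW | exact: nrm_entry].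
  apply: le_trans (hP y) _; rewrite QP -norm_conjC.
  apply: real_ler_norm; rewrite -QP; exact: QF_real.
have hk : mu * `|y k 0| <= 1.
  have [z0|nz] := eqVneq (`|y k 0|) 0; first by rewrite z0 mulr0 ler01.
  have zp : 0 < `|y k 0| by rewrite lt_def nz normr_ge0.
  by rewrite -(ler_pM2r zp) mul1r -mulrA -expr2 hl.
rewrite -yE -(expr_le1 (n:=2)) //; last by rewrite mulr_ge0 ?normr_ge0 // ltW.
rewrite exprMn expr2 -mulrA; apply: le_trans hk.
by apply: ler_wpM2l; [exact: ltW | exact: hl].
Qed.


Lemma QF_lin (b : C) H G x : QF (b *: H - G) x = b * QF H x - QF G x.
Proof.
rewrite /QF mulmxBr mulmxBl -scalemxAr -scalemxAl.
set u := adj x *m H *m x; set v := adj x *m G *m x.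
by rewrite !mxE.
Qed.

Lemma perturb H G : posdef H -> adj G = G -> exists B K : C,
  1 <= B /\ 0 <= K /\ forall b, B < b ->
  posdef (b *: H - G) /\ forall i j, `|b * invmx (b *: H - G) i j| <= K.
Proof.
move=> pH aG; have [aH _] := pH.
have [N [N0 hN]] := coercive _ pH.
set M := SA G.
have M0 : 0 <= M by rewrite /M /SA sumr_ge0 // => i _; rewrite sumr_ge0.
have c0 : 0 <= M * N by rewrite mulr_ge0 // ltW.
exists (1 + (M * N) *+ 2), (N *+ 2); split; first by rewrite lerDl mulrn_wge0.
split; first by rewrite mulrn_wge0 // ltW.
move=> b hb.
have b0 : 0 < b by apply: le_lt_trans hb; rewrite addr_ge0 ?ler01 // mulrn_wge0.
have br : b \is Num.real by exact: gtr0_real.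
have N2 : N *+ 2 != 0 by rewrite gt_eqF // mulrn_wgt0.
have two0 : (2 : C) != 0 by rewrite pnatr_eq0.
set mu := b / (N *+ 2).
have mu0 : 0 < mu by rewrite /mu divr_gt0 // mulrn_wgt0.
have cb : M * N <= b / 2.
  have h2 : (M * N) *+ 2 <= b.
    apply: le_trans (ltW hb); rewrite lerDr; exact: ler01.
  have -> : M * N = ((M * N) *+ 2) / 2 by rewrite -mulr_natr -mulrA mulfV // mulr1.
  by apply: ler_wpM2r => //; rewrite invr_ge0 ler0n.
have key x : mu * nrm x <= QF (b *: H - G) x.
  rewrite QF_lin; set h := QF H x; set g := QF G x; set r := nrm x.
  have h0 : 0 <= h by exact: posdef_ge0.
  have gle : g <= M * N * h.
    apply: le_trans (_ : g <= M * r) _.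
      by apply: le_trans (QF_bound G x); exact: real_ler_norm (QF_real G x aG).
    by rewrite -mulrA; apply: ler_wpM2l => //; exact: hN.
  apply: le_trans (_ : mu * r <= b / 2 * h) _.
    apply: le_trans (_ : mu * r <= mu * (N * h)) _.
      by apply: ler_wpM2l; [exact: ltW | exact: hN].
    rewrite le_eqVlt; apply/orP; left; apply/eqP; rewrite /mu.
    by field; rewrite gt_eqF.
  have -> : b * h - g = b / 2 * h + (b / 2 * h - g).
    by field.
  rewrite lerDl subr_ge0; apply: le_trans gle _.
  by apply: ler_wpM2r.
have aP : adj (b *: H - G) = b *: H - G by rewrite cjB cjZ aH aG (conj_Creal br).
have pP : posdef (b *: H - G).
  split => // x nx; apply: lt_le_trans (key x).
  by rewrite mulr_gt0 // nrm_gt0.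
split => // i j.
have := @inv_bound _ _ (posdef_unit _ pP) aP mu0 key i j.
move=> hb1; rewrite normrM (gtr0_norm b0).
have e : b = N *+ 2 * mu by rewrite /mu; field; rewrite gt_eqF.
rewrite {1}e -mulrA -[X in _ <= X]mulr1; apply: ler_wpM2l => //.
by rewrite mulrn_wge0 // ltW.
Qed.

End Quad.

Set Implicit Arguments. Unset Strict Implicit.

Arguments perturb {C n H G}.
Arguments posdef_unit {C n}.
Arguments posdef_ge0 {C n}.

Section Lim.
Variable C : numClosedFieldType.

Definition bnd m n (F : C -> 'M[C]_(m, n)) := exists B K : C,
  0 <= B /\ 0 <= K /\ forall b, B < b -> forall i j, `|F b i j| <= K.

Definition asym m n (F : C -> 'M[C]_(m, n)) (L : 'M[C]_(m,n)) :=
  exists E : C -> 'M[C]_(m, n), bnd E /\ exists B0 : C, 0 <= B0 /\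
    forall b, B0 < b -> F b = L + b^-1 *: E b.

Lemma le_entry_sum m n (A : 'M[C]_(m, n)) i j :
  `|A i j| <= \sum_i \sum_j `|A i j|.
Proof.
rewrite (bigD1 i) //= (bigD1 j) //= -addrA lerDl addr_ge0 //.
  by rewrite sumr_ge0.
by rewrite sumr_ge0 // => k _; rewrite sumr_ge0.
Qed.

Lemma bnd_const m n (A : 'M[C]_(m, n)) : bnd (fun _ => A).
Proof.
exists 0, (\sum_i \sum_j `|A i j|); split => //; split.
  by rewrite sumr_ge0 // => k _; rewrite sumr_ge0.
by move=> b _ i j; exact: le_entry_sum.
Qed.

Lemma le_lt_sum (x y b : C) : 0 <= x -> 0 <= y -> x + y < b -> x < b /\ y < b.
Proof.
move=> x0 y0 h; split; apply: le_lt_trans h.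
  by rewrite lerDl.
by rewrite lerDr.
Qed.

Lemma bnd2 m n p r (F : C -> 'M[C]_(m, n)) (G : C -> 'M[C]_(p, r)) :
  bnd F -> bnd G -> exists B K1 K2 : C, 0 <= B /\ 0 <= K1 /\ 0 <= K2 /\
   forall b, B < b -> (forall i j, `|F b i j| <= K1) /\ (forall i j, `|G b i j| <= K2).
Proof.
move=> [B1 [K1 [B10 [K10 h1]]]] [B2 [K2 [B20 [K20 h2]]]].
exists (B1 + B2), K1, K2; split; first exact: addr_ge0.
do 2 (split => //); move=> b hb; have [hb1 hb2] := le_lt_sum B10 B20 hb.
by split; [exact: h1 | exact: h2].
Qed.

Lemma bndD m n (F G : C -> 'M[C]_(m, n)) : bnd F -> bnd G -> bnd (fun b => F b + G b).
Proof.
move=> hF hG; have [B [K1 [K2 [B0 [K10 [K20 h]]]]]] := bnd2 hF hG.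
exists B, (K1 + K2); split => //; split; first exact: addr_ge0.
move=> b hb i j; have [h1 h2] := h b hb; rewrite mxE.
apply: le_trans (ler_normD _ _) _; exact: lerD.
Qed.

Lemma bndN m n (F : C -> 'M[C]_(m, n)) : bnd F -> bnd (fun b => - F b).
Proof.
move=> [B [K [B0 [K0 h]]]]; exists B, K; do 2 (split => //).
by move=> b hb i j; rewrite mxE normrN; exact: h.
Qed.

Lemma bndB m n (F G : C -> 'M[C]_(m, n)) : bnd F -> bnd G -> bnd (fun b => F b - G b).
Proof. by move=> hF hG; apply: bndD => //; exact: bndN. Qed.

Lemma bndM m n p (F : C -> 'M[C]_(m, n)) (G : C -> 'M[C]_(n, p)) :
  bnd F -> bnd G -> bnd (fun b => F b *m G b).
Proof.
move=> hF hG; have [B [K1 [K2 [B0 [K10 [K20 h]]]]]] := bnd2 hF hG.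
exists B, ((K1 * K2) *+ n); split => //; split; first by rewrite mulrn_wge0 // mulr_ge0.
move=> b hb i j; have [h1 h2] := h b hb; rewrite mxE.
apply: le_trans (ler_norm_sum _ _ _) _.
rewrite -[n in X in _ <= X]card_ord -sumr_const; apply: ler_sum => k _.
by rewrite normrM; apply: ler_pM => //; rewrite normr_ge0.
Qed.

Lemma asym_lim m n (F : C -> 'M[C]_(m, n)) L : asym F L -> mxlim_infty F L.
Proof.
move=> [E [[B1 [K [B10 [K0 hE]]]] [B0 [B00 hF]]]] eps eps0.
have Ke0 : 0 <= K / eps by rewrite divr_ge0 // ltW.
have Bp : 0 <= B0 + B1 by exact: addr_ge0.
exists (B0 + B1 + K / eps); split; first by apply: ger0_real; exact: addr_ge0.
move=> b hb i j.
have [hb01 hk] := le_lt_sum Bp Ke0 hb.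
have [hb0 hb1] := le_lt_sum B00 B10 hb01.
have b0 : 0 < b by apply: le_lt_trans hb0.
rewrite (hF b hb0) mxE addrAC subrr add0r mxE normrM normfV (gtr0_norm b0).
apply: le_lt_trans (_ : b^-1 * K < _).
  by apply: ler_wpM2l; [rewrite invr_ge0 ltW | exact: hE].
have hK : K < b * eps.
  have e0 : eps != 0 by rewrite gt_eqF.
  by rewrite -(divfK e0 K) ltr_pM2r.
by rewrite -(ltr_pM2l b0) mulrA mulfV ?gt_eqF // mul1r.
Qed.


Lemma asymB m n (F1 F2 : C -> 'M[C]_(m, n)) L1 L2 :
  asym F1 L1 -> asym F2 L2 -> asym (fun b => F1 b - F2 b) (L1 - L2).
Proof.
move=> [E1 [hE1 [B1 [B10 h1]]]] [E2 [hE2 [B2 [B20 h2]]]].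
exists (fun b => E1 b - E2 b); split; first exact: bndB.
exists (B1 + B2); split; first exact: addr_ge0.
move=> b hb; have [hb1 hb2] := le_lt_sum B10 B20 hb.
rewrite (h1 b hb1) (h2 b hb2) scalerBr opprD addrACA; congr (_ + _).
Qed.

Lemma asym_ext m n (F G : C -> 'M[C]_(m, n)) L :
  (forall b, F b = G b) -> asym G L -> asym F L.
Proof.
move=> e [E [hE [B [B0 h]]]]; exists E; split => //; exists B; split => //.
by move=> b hb; rewrite e; exact: h.
Qed.

Lemma pert_bnd n (H G : 'M[C]_n) : posdef H -> adj G = G -> exists B : C,
  1 <= B /\ (forall b, B < b -> posdef (b *: H - G)) /\
  bnd (fun b => b *: invmx (b *: H - G)) /\ bnd (fun b => invmx (b *: H - G)).
Proof.
move=> pH aG; have [B [K [B1 [K0 h]]]] := perturb pH aG.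
have B0 : 0 <= B by apply: le_trans B1; exact: ler01.
exists B; split => //; split; first by move=> b /h [].
split.
  exists B, K; do 2 (split => //); move=> b hb i j; rewrite mxE.
  by have [_ ->] := h b hb.
exists B, K; do 2 (split => //); move=> b hb i j.
have [_ hb'] := h b hb; apply: le_trans (hb' i j).
have b1 : 1 <= b by apply: le_trans B1 (ltW hb).
rewrite normrM -[X in X <= _]mul1r; apply: ler_wpM2r => //.
by rewrite ger0_norm // (le_trans ler01).
Qed.

Lemma lim_mu n p r (H G : 'M[C]_n) (V : 'M[C]_(p, n)) (W : 'M[C]_(n, r)) :
  posdef H -> adj G = G ->
  asym (fun b => b *: (V *m invmx (b *: H - G) *m W)) (V *m invmx H *m W).
Proof.
move=> pH aG; have [B [B1 [hpos [hb1 _]]]] := pert_bnd pH aG.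
have uH := posdef_unit _ pH.
exists (fun b => V *m (b *: invmx (b *: H - G)) *m G *m invmx H *m W); split.
  apply: bndM; last exact: bnd_const.
  apply: bndM; last exact: bnd_const.
  apply: bndM; last exact: bnd_const.
  apply: bndM; first exact: bnd_const.
  exact: hb1.
have B0 : 0 <= B by apply: le_trans B1; exact: ler01.
exists B; split => // b hb.
have b0 : b != 0 by rewrite gt_eqF // (lt_le_trans ltr01) // (le_trans B1) // ltW.
set P := b *: H - G.
have uP : P \in unitmx by exact: posdef_unit (hpos b hb).
have GE : G = b *: H - P by rewrite /P opprB addrCA subrr addr0.
have key : b *: invmx P = invmx H + invmx P *m G *m invmx H.
  rewrite [in RHS]GE mulmxBr mulmxBl -scalemxAr -scalemxAl.
  rewrite -(mulmxA _ H) mulmxV // mulmx1 mulVmx // mul1mx.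
  by rewrite addrC subrK.
rewrite -scalemxAr -!scalemxAl scalerA mulVf // scale1r.
rewrite [in LHS]scalemxAl [in LHS]scalemxAr key mulmxDr mulmxDl !mulmxA.
by [].
Qed.


Lemma ac4 (V : zmodType) (a x y z : V) : a + y + (x + z) = a + (x + y + z).
Proof. by rewrite -!addrA (addrCA y). Qed.

Lemma alg_lam n p (P Pi Ai : 'M[C]_n) (c e : 'M[C]_(n, p)) :
  P *m Pi = 1%:M -> Pi *m P = 1%:M ->
  (adj c *m Ai *m P + adj e) *m Pi *m (P *m Ai *m c + e) =
  adj c *m Ai *m P *m Ai *m c + (adj c *m Ai *m e + adj e *m Ai *m c
   + adj e *m Pi *m e).
Proof.
move=> h1 h2.
have k1 m (X : 'M[C]_(m, n)) : X *m P *m Pi = X by rewrite -mulmxA h1 mulmx1.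
have k2 m (X : 'M[C]_(m, n)) : X *m Pi *m P = X by rewrite -mulmxA h2 mulmx1.
rewrite !(mulmxDl, mulmxDr) !mulmxA !k1 !k2.
by rewrite ac4.
Qed.

Lemma lim_lam n p (A D : 'M[C]_n) (c d : 'M[C]_(n, p)) : posdef A -> adj D = D ->
  asym (fun b => b^-1 *: (adj (b *: c - d) *m invmx (b *: A - D) *m (b *: c - d)))
       (adj c *m invmx A *m c).
Proof.
move=> pA aD; have [B [B1 [hpos [_ hb2]]]] := pert_bnd pA aD.
have uA := posdef_unit _ pA; have [aA _] := pA.
set Ai := invmx A.
have aAi : adj Ai = Ai by rewrite cj_inv // aA.
set e := D *m Ai *m c - d.
exists (fun b => - (adj c *m Ai *m D *m Ai *m c) + adj c *m Ai *m e + adj e *m Ai *m c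
                 + adj e *m invmx (b *: A - D) *m e); split.
  apply: bndD; last by apply: bndM; [apply: bndM; [exact: bnd_const|exact: hb2]|exact: bnd_const].
  apply: bndD; last exact: bnd_const.
  apply: bndD; exact: bnd_const.
have B0 : 0 <= B by apply: le_trans B1; exact: ler01.
exists B; split => // b hb.
have b0 : b != 0 by rewrite gt_eqF // (lt_le_trans ltr01) // (le_trans B1) // ltW.
have br : b \is Num.real by apply: gtr0_real; rewrite (lt_le_trans ltr01) // (le_trans B1) // ltW.
set P := b *: A - D.
have uP : P \in unitmx by exact: posdef_unit (hpos b hb).
have aP : adj P = P by rewrite /P cjB cjZ aA aD (conj_Creal br).
set w := b *: c - d.
have wE : w = P *m Ai *m c + e.
  rewrite /w /P /e !mulmxBl -scalemxAl mulmxV // -scalemxAl mul1mx.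
  by rewrite addrA subrK.
have awE : adj w = adj c *m Ai *m P + adj e by rewrite wE cjD !cjM aAi aP mulmxA.
have PE : adj c *m Ai *m P *m Ai *m c =
    b *: (adj c *m Ai *m c) - adj c *m Ai *m D *m Ai *m c.
  rewrite /P mulmxBr !mulmxBl -scalemxAr -!scalemxAl (mulmxKV uA).
  by [].
suff -> : adj w *m invmx P *m w = b *: (adj c *m Ai *m c) +
   (- (adj c *m Ai *m D *m Ai *m c) + adj c *m Ai *m e + adj e *m Ai *m c
                 + adj e *m invmx P *m e).
  by rewrite scalerDr scalerA mulVf // scale1r.
rewrite awE wE alg_lam ?mulmxV ?mulVmx // PE.
by rewrite -!addrA.
Qed.

End Lim.

Section Blocks.
Variable C : numClosedFieldType.
Variable q : nat.

Lemma Rm0 i : Rm q i (0 : C) = 1%:M.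
Proof. by rewrite /Rm scale0r subr0 invmx1. Qed.

Lemma bhankE i (f : nat -> 'M[C]_q) x y :
  bhank i f x y = f (tagnat.sig1 x + tagnat.sig1 y)%N (tagnat.sig2 x) (tagnat.sig2 y).
Proof. by rewrite /bhank mxE. Qed.

Lemma bhank_lin i (a : C) (f g : nat -> 'M[C]_q) :
  bhank i (fun n => a *: f n - g n) = a *: bhank i f - bhank i g.
Proof. by apply/matrixP => x y; rewrite !mxE. Qed.

Lemma bhank_herm i (f : nat -> 'M[C]_q) :
  (forall n, (n <= i + i)%N -> adj (f n) = f n) -> adj (bhank i f) = bhank i f.
Proof.
move=> hf; apply/matrixP => x y; rewrite cjE !bhankE addnC.
rewrite -cjE hf //; apply: leq_add; rewrite -ltnS; exact: ltn_ord.
Qed.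

Lemma bcol_lin i (a : C) (f g : nat -> 'M[C]_q) :
  bcol i (fun n => a *: f n - g n) = a *: bcol i f - bcol i g.
Proof. by apply/matrixP => x y; rewrite !mxE. Qed.

Lemma bcolN i (f : nat -> 'M[C]_q) : bcol i (fun n => - f n) = - bcol i f.
Proof. by apply/matrixP => x y; rewrite !mxE. Qed.


Lemma cj_mxblock m n (B : forall (l : 'I_m) (k : 'I_n), 'M[C]_q) :
  adj (@mxblock C m n (fun _ => q) (fun _ => q) B) =
  @mxblock C n m (fun _ => q) (fun _ => q) (fun l k => adj (B k l)).
Proof. by apply/matrixP => x y; rewrite cjE !mxE. Qed.

Lemma cj_mxcol m (B : forall (l : 'I_m), 'M[C]_q) :
  adj (@mxcol C m (fun _ => q) q B) = @mxrow C m (fun _ => q) q (fun l => adj (B l)).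
Proof. by apply/matrixP => x y; rewrite cjE !mxE. Qed.

Lemma mxblock_id m :
  @mxblock C m m (fun _ => q) (fun _ => q) (fun l k => if l == k then 1%:M else 0) = 1%:M.
Proof.
rewrite -[RHS](@mxdiagZ C m (fun _ => q) 1); apply: eq_mxblock => l k.
by case: eqP => // _; rewrite conform_mx_id.
Qed.

Lemma sum_pick (V : zmodType) N (l : nat) (F : 'I_N -> V) (hl : (l < N)%N) :
  \sum_(m < N) (if (m : nat) == l then F m else 0) = F (Ordinal hl).
Proof.
rewrite (bigD1 (Ordinal hl)) //= eqxx big1 ?addr0 // => m hm; rewrite ifN //.
Qed.

Section Emb.
Variable N : nat.
Definition Emb := @mxblock C N.+2 N.+1 (fun _ => q) (fun _ => q)
   (fun l k => if (l : nat) == k then 1%:M else 0).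

Lemma cj_Emb : adj Emb = @mxblock C N.+1 N.+2 (fun _ => q) (fun _ => q)
   (fun l k => if (k : nat) == l then 1%:M else 0).
Proof.
rewrite /Emb cj_mxblock; apply: eq_mxblock => l k.
by case: eqP => _; rewrite ?cj1 ?cj0.
Qed.

Lemma Emb_iso : adj Emb *m Emb = 1%:M.
Proof.
rewrite cj_Emb /Emb mul_mxblock -[RHS]mxblock_id; apply: eq_mxblock => l k.
have hl : (l < N.+2)%N by rewrite (leq_trans (ltn_ord l)).
rewrite -(sum_pick (fun m : 'I_N.+2 => if (m : nat) == k then 1%:M else 0 : 'M[C]_q) hl).
apply: eq_bigr => m _.
by case: eqP => hml; case: eqP => hmk; rewrite ?mul1mx ?mul0mx //.
Qed.


Lemma Emb_hank (f : nat -> 'M[C]_q) : adj Emb *m bhank N.+1 f *m Emb = bhank N f.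
Proof.
rewrite cj_Emb /Emb /bhank !mul_mxblock; apply: eq_mxblock => l k.
have hl : (l < N.+2)%N by rewrite (leq_trans (ltn_ord l)).
have hk : (k < N.+2)%N by rewrite (leq_trans (ltn_ord k)).
under eq_bigr => m _ do rewrite mulmx_suml.
rewrite exchange_big /=.
rewrite (eq_bigr (fun j : 'I_N.+2 => if (j : nat) == l then
   \sum_(i < N.+2) (if (i : nat) == k then f (j + i)%N else 0) else 0)).
  by rewrite (sum_pick _ hl) (sum_pick _ hk).
move=> j _; case: eqP => _; last by rewrite big1 // => i _; rewrite !mul0mx.
by apply: eq_bigr => i _; case: eqP => _; rewrite ?mul1mx ?mulmx1 ?mulmx0.
Qed.

End Emb.


Definition V0 := vv C q 0.

Lemma V0E : V0 = @mxcol C 1 (fun _ => q) q (fun l => if (l : nat) == 0%N then 1%:M else 0).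
Proof. by []. Qed.

Lemma V0_iso : adj V0 *m V0 = 1%:M.
Proof.
rewrite V0E cj_mxcol mul_mxrow_mxcol big_ord1 /=; by rewrite cj1 mul1mx.
Qed.

Lemma V0_coiso : V0 *m adj V0 = 1%:M.
Proof.
rewrite V0E cj_mxcol mul_mxcol_mxrow -[RHS]mxblock_id; apply: eq_mxblock => l k.
by rewrite !ord1 /= cj1 mul1mx.
Qed.

Lemma V0_hank (f : nat -> 'M[C]_q) : bhank 0 f = V0 *m f 0%N *m adj V0.
Proof.
rewrite V0E cj_mxcol mxcol_mul mul_mxcol_mxrow /bhank; apply: eq_mxblock => l k.
by rewrite !ord1 /= cj1 mul1mx mulmx1.
Qed.

End Blocks.

Section Unitary.
Variable C : numClosedFieldType.

Lemma posdef_emb m n (Y : 'M[C]_m) (E : 'M[C]_(m, n)) :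
  adj E *m E = 1%:M -> posdef Y -> posdef (adj E *m Y *m E).
Proof.
move=> hE [aY pY]; split; first by rewrite !cjM cjK aY mulmxA.
move=> x nx; have := pY (E *m x); rewrite cjM !mulmxA; apply.
apply: contraNneq nx => h; by rewrite -[x]mul1mx -hE -mulmxA h mulmx0.
Qed.

Lemma inv_unitary m n (Y : 'M[C]_m) (U : 'M[C]_(m, n)) :
  adj U *m U = 1%:M -> U *m adj U = 1%:M -> Y \in unitmx ->
  invmx (adj U *m Y *m U) = adj U *m invmx Y *m U.
Proof.
move=> h1 h2 uY.
have h : adj U *m Y *m U *m (adj U *m invmx Y *m U) = 1%:M.
  rewrite !mulmxA -(mulmxA _ U) h2 mulmx1 -(mulmxA _ Y) mulmxV // mulmx1 h1 //.
have [uX _] := mulmx1_unit h.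
by rewrite -[LHS]mulmx1 -h mulKmx.
Qed.

End Unitary.

Section Main.
Variable C : numClosedFieldType.
Variable q : nat.
Variable s : nat -> 'M[C]_q.

Lemma bcol_ext i (f g : nat -> 'M[C]_q) : (forall n, f n = g n) -> bcol i f = bcol i g.
Proof. by move=> h; apply/matrixP => x y; rewrite !mxE h. Qed.

Lemma bhank_ext i (f g : nat -> 'M[C]_q) : (forall n, f n = g n) -> bhank i f = bhank i g.
Proof. by move=> h; apply/matrixP => x y; rewrite !mxE h. Qed.

Lemma K1E b i : K1 s b i = b *: bhank i s - bhank i (fun n => s n.+1).
Proof. by rewrite /K1 bhank_lin. Qed.

Lemma H2E b i : H2 s 0 b i = b *: bhank i (fun n => s n.+1) - bhank i (fun n => s n.+2).
Proof.
rewrite /H2 -bhank_lin; apply: bhank_ext => n.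
by apply/matrixP => x y; rewrite /shat !mxE; ring.
Qed.

Lemma K2E i : K2 s 0 i = bhank i (fun n => s n.+1).
Proof.
by rewrite /K2; apply: bhank_ext => n; apply/matrixP => x y; rewrite !mxE; ring.
Qed.

Lemma u2E b i : u2 s 0 b i + 0 *: (vv C q i *m s 0) =
  - (b *: bcol i s - bcol i (fun n => s n.+1)).
Proof.
rewrite scale0r addr0 -bcol_lin -bcolN /u2; apply: bcol_ext => -[|n] /=;
  by apply/matrixP => x y; rewrite /u20 /shat !mxE; ring.
Qed.

Lemma ut2E i : ut2 s 0 i = - bcol i s.
Proof.
rewrite -bcolN /ut2; apply: bcol_ext => -[|n] //=.
by apply/matrixP => x y; rewrite !mxE; ring.
Qed.

Lemma mu_asym i : posdef (bhank i s) ->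
  adj (bhank i (fun n => s n.+1)) = bhank i (fun n => s n.+1) ->
  asym (fun b => b *: mu s 0 b i) (Mnu s 0 i).
Proof.
move=> pH aG.
have -> : Mnu s 0 i = adj (vv C q i) *m invmx (bhank i s) *m vv C q i.
  by rewrite /Mnu Rm0 cj1 !mulmx1.
apply: asym_ext (lim_mu (adj (vv C q i)) (vv C q i) pH aG) => b.
by rewrite /mu Rm0 cj1 !mulmx1 K1E.
Qed.

Lemma lam_asym i : posdef (bhank i (fun n => s n.+1)) ->
  adj (bhank i (fun n => s n.+2)) = bhank i (fun n => s n.+2) ->
  asym (fun b => b^-1 *: lam s 0 b i) (Lnu s 0 i).
Proof.
move=> pA aD.
have -> : Lnu s 0 i = adj (bcol i s) *m invmx (bhank i (fun n => s n.+1)) *m bcol i s.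
  by rewrite /Lnu Rm0 cj1 !mulmx1 K2E ut2E cjN !(mulNmx, mulmxN) opprK.
apply: asym_ext (lim_lam (bcol i s) (bcol i (fun n => s n.+1)) pA aD) => b.
rewrite /lam Rm0 cj1 !mulmx1 H2E.
by rewrite u2E cjN !(mulNmx, mulmxN) opprK.
Qed.

End Main.


Theorem mainTheorem12 (C : numClosedFieldType) (q j : nat) (s : nat -> 'M[C]_q) :
  (forall k, (k <= 2 * j + 2)%N -> adj (s k) = s k) ->
  posdef (bhank j s) ->
  posdef (bhank j (fun n => s n.+1)) ->
  (exists B : C, B \is Num.real /\
     forall b : C, B < b -> posdef (K1 s b j) /\ posdef (H2 s 0 b j)) /\
  mxlim_infty (fun b => b *: mpar s 0 b j) (Mpar s 0 j) /\
  mxlim_infty (fun b => b^-1 *: lpar s 0 b j) (Lpar s 0 j).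
Proof.
move=> hs p1 p2.
have aS1 : adj (bhank j (fun n => s n.+1)) = bhank j (fun n => s n.+1) by case: p2.
have aS2 : adj (bhank j (fun n => s n.+2)) = bhank j (fun n => s n.+2).
  by apply: bhank_herm => n hn; apply: hs; lia.
split.
  have [B1 [B11 [h1 _]]] := pert_bnd p1 aS1.
  have [B2 [B21 [h2 _]]] := pert_bnd p2 aS2.
  have B10 : 0 <= B1 by apply: le_trans B11; exact: ler01.
  have B20 : 0 <= B2 by apply: le_trans B21; exact: ler01.
  exists (B1 + B2); split; first by apply: ger0_real; exact: addr_ge0.
  move=> b hb; have [hb1 hb2] := le_lt_sum B10 B20 hb.
  by rewrite K1E H2E; split; [exact: h1 | exact: h2].
case: j hs p1 p2 aS1 aS2 => [|j'] hs p1 p2 aS1 aS2.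
  have hM : Mpar s 0 0 = Mnu s 0 0.
    rewrite /Mnu Rm0 cj1 !mulmx1 -inv_unitary ?V0_iso ?V0_coiso //; last first.
      exact: posdef_unit p1.
    by rewrite /H1 V0_hank !mulmxA V0_iso mul1mx -mulmxA V0_iso mulmx1.
  have hL : Lpar s 0 0 = Lnu s 0 0 by rewrite /Lnu Rm0 cj1 !mulmx1.
  rewrite hM hL; split; apply: asym_lim.
    exact: mu_asym p1 aS1.
  exact: lam_asym p2 aS2.
have p1' : posdef (bhank j' s).
  by rewrite -(@Emb_hank C q j'); apply: posdef_emb (Emb_iso C q j') p1.
have p2' : posdef (bhank j' (fun n => s n.+1)).
  by rewrite -(@Emb_hank C q j'); apply: posdef_emb (Emb_iso C q j') p2.
have aS1' : adj (bhank j' (fun n => s n.+1)) = bhank j' (fun n => s n.+1) by case: p2'.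
have aS2' : adj (bhank j' (fun n => s n.+2)) = bhank j' (fun n => s n.+2).
  by apply: bhank_herm => n hn; apply: hs; lia.
split; apply: asym_lim.
  apply: asym_ext (asymB (mu_asym p1 aS1) (mu_asym p1' aS1')) => b.
  by rewrite /= scalerBr.
apply: asym_ext (asymB (lam_asym p2 aS2) (lam_asym p2' aS2')) => b.
by rewrite /= scalerBr.
Qed.
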